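(* Fix integers $m \ge 1$ and $n_1,\dots,n_m \ge 2$, and consider the $m$-dimensional single parity-check product code transmitted over the binary erasure channel with erasure probability $\epsilon \in [0,1]$, as described in the context. Let $\mathbf{1} = (1,\dots,1) \in A_{\mathrm{info}}$ be the first information position in the successive cancellation decoding order. Then \[ \Pr[S_m(\mathbf{1}) \text{ is false}] = \Pr[E_m(a) \text{ is false}] \quad \text{for every } a \in A_{\mathrm{info}}. \] That is, the erasure probability of the first decoded information bit under successive cancellation decoding equals the erasure probability of each information bit under Elias' decoding. Moreover, this common value equals $\epsilon_m$, where $\epsilon_0 = \epsilon$ and \[ \epsilon_\ell = \epsilon_{\ell-1}\left(1-(1-\epsilon_{\ell-1})^{n_\ell-1}\right) \quad \text{for } \ell = 1,\dots,m. \]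
   Context: Index set and code. Let $A = \{1,\dots,n_1\}\times\cdots\times\{1,\dots,n_m\}$. The $m$-dimensional single parity-check product code (SPC-PC) consists of all binary arrays $x: A \to \{0,1\}$ such that every line in every direction $\ell$ has even weight; a line in direction $\ell$ is obtained by fixing all coordinates except the $\ell$-th. This is the product of the $(n_\ell, n_\ell-1)$ SPC codes, so $n = \prod_\ell n_\ell$ and $k = \prod_\ell (n_\ell-1)$. The information positions are $A_{\mathrm{info}} = \{a \in A : a_\ell \le n_\ell-1 \text{ for all } \ell\}$; a codeword is uniquely determined by its entries there, and these entries are the information bits. Channel. Each codeword entry is independently erased with probability $\epsilon$ and otherwise received correctly. Notation. For $\ell = 0,\dots,m$ let $A_\ell = \{a \in A : a_i \le n_i-1 \text{ for all } i \le \ell\}$, so $A_0 = A$ and $A_m = A_{\mathrm{info}}$. For $a \in A$ and $b \in \{1,\dots,n_\ell\}$, let $a[\ell\leftarrow b]$ denote $a$ with its $\ell$-th coordinate replaced by $b$. Elias' decoder on the erasure channel. This decoder processes dimensions $1,\dots,m$ in one sweep, applying local SPC decoding to each line. For $a \in A$, $E_0(a)$ is true iff entry $a$ is not erased. For $\ell \ge 1$ and $a \in A_\ell$, $E_\ell(a)$ is true iff $E_{\ell-1}(a)$ is true, or $E_{\ell-1}(a[\ell\leftarrow b])$ is true for all $b \in \{1,\dots,n_\ell\}\setminus\{a_\ell\}$. The information bit at $a \in A_{\mathrm{info}}$ is recovered iff $E_m(a)$ is true, and is declared erased otherwise. Successive cancellation (SC) decoder on the erasure channel. The information bits are decoded in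 lexicographic order of $(a_1,\dots,a_m)$, and each local SPC decision uses the previously decided bits. Assuming all earlier bits were decided correctly, the status is given as follows. $S_0 = E_0$. For $\ell \ge 1$ and $a \in A_\ell$, $S_\ell(a)$ is true iff $S_{\ell-1}(a)$ is true, or $S_{\ell-1}(a[\ell\leftarrow b])$ is true for all $b$ with $a_\ell < b \le n_\ell$. The information bit at $a$ is recovered iff $S_m(a)$ is true. *)

(* Defs.v *)
From mathcomp Require Import all_boot all_order all_algebra.
Set Implicit Arguments. Unset Strict Implicit. Unset Printing Implicit Defensive.
Import Order.TTheory GRing.Theory Num.Theory.

(* Dimensions n_1, ..., n_m are given as n : nat -> nat (1-based: n l is n_l).
   An index a in A = {1..n_1} x ... x {1..n_m} is a dependent finite function
   a : forall i : 'I_m, 'I_(n i.+1); coordinate i (0-based) is direction i+1,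
   and the value (a i : nat) is a_{i+1} - 1 (0-based entries). *)
Definition idx (m : nat) (n : nat -> nat) := {dffun forall i : 'I_m, 'I_(n i.+1)}.

(* erasure pattern: true = entry is erased *)
Definition pattern (m : nat) (n : nat -> nat) := {ffun idx m n -> bool}.

Definition coord m n (a : idx m n) (l : nat) : nat :=
  if @insub nat (fun k => k < m) _ l.-1 is Some j then nat_of_ord (a (j : 'I_m)) else 0.

(* a[l <- b] : replace the l-th coordinate (l in 1..m) by the 0-based value b *)
Definition upd m n (a : idx m n) (l : nat) (b : nat) : idx m n :=
  [ffun j : 'I_m => if j.+1 == l then insubd (a j) b else a j].

Definition info m n (a : idx m n) : bool := [forall j : 'I_m, (a j).+1 < n j.+1].

(* Elias' decoder status E_l(a) (true = recovered) *)
Fixpoint Eel m n (l : nat) (e : pattern m n) (a : idx m n) : bool :=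
  match l with
  | 0 => ~~ e a
  | k.+1 => Eel k e a ||
            [forall b : 'I_(n k.+1), (nat_of_ord b != coord a k.+1) ==> Eel k e (upd a k.+1 b)]
  end.

Fixpoint Ssc m n (l : nat) (e : pattern m n) (a : idx m n) : bool :=
  match l with
  | 0 => ~~ e a
  | k.+1 => Ssc k e a ||
            [forall b : 'I_(n k.+1), (coord a k.+1 < b) ==> Ssc k e (upd a k.+1 b)]
  end.

Definition Pr (R : pzRingType) m n (eps : R) (P : pred (pattern m n)) : R :=
  (\sum_(e : pattern m n | P e) \prod_(a : idx m n) (if e a then eps else 1 - eps))%R.

Fixpoint epsl (R : pzRingType) (n : nat -> nat) (eps : R) (l : nat) : R :=
  match l with
  | 0 => eps
  | k.+1 => (epsl n eps k * (1 - (1 - epsl n eps k) ^+ (n k.+1).-1))%R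
  end.

(* Main.v *)
Require Import Defs.
From mathcomp Require Import all_boot all_order all_algebra.
Import Order.TTheory GRing.Theory Num.Theory.

Module Helpers.
Set Implicit Arguments. Unset Strict Implicit.
Local Open Scope ring_scope.

Section Prob.
Variable R : comRingType.
Variable eps : R.
Variable I : finType.
Notation pat := {ffun I -> bool}.

Definition w (t : bool) : R := if t then eps else 1 - eps.
Definition mu (e : pat) : R := \prod_a w (e a).
Definition Ex (f : pat -> R) : R := \sum_e f e * mu e.
Definition dep (S : pred I) (f : pat -> R) :=
  forall e e' : pat, (forall x, S x -> e x = e' x) -> f e = f e'.
Definition setb (i : I) (t : bool) (e : pat) : pat :=
  [ffun x => if x == i then t else e x].
Definition flipb (i : I) (e : pat) : pat :=
  [ffun x => if x == i then ~~ e x else e x].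

Lemma wC t : w t + w (~~ t) = 1.
Proof. by case: t; rewrite /w /= ?subrK // addrC subrK. Qed.

Lemma Ex1 : Ex (fun _ => 1) = 1.
Proof.
rewrite /Ex; under eq_bigr do rewrite mul1r.
rewrite /mu -(bigA_distr_bigA (fun (_ : I) t => w t)) /=.
by apply: big1 => i _; rewrite big_bool /= (wC true).
Qed.

Lemma Ex0 : Ex (fun _ => 0) = 0.
Proof. by apply: big1 => e _; rewrite mul0r. Qed.

Lemma Ex_cmul c g : Ex (fun e => c * g e) = c * Ex g.
Proof. by rewrite /Ex mulr_sumr; apply: eq_bigr => e _; rewrite mulrA. Qed.

Lemma ExB f g : Ex (fun e => f e - g e) = Ex f - Ex g.
Proof. by rewrite /Ex -sumrB; apply: eq_bigr => e _; rewrite mulrBl. Qed.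

Lemma ExC c : Ex (fun _ => c) = c.
Proof. by rewrite -[c]mulr1 (Ex_cmul c (fun _ => 1)) Ex1. Qed.

Lemma flipbK i : involutive (flipb i).
Proof. by move=> e; apply/ffunP => x; rewrite !ffunE; case: eqP => //; rewrite negbK. Qed.

Definition mu' i (e : pat) : R := \prod_(a | a != i) w (e a).

Lemma mu_split i e : mu e = w (e i) * mu' i e.
Proof. by rewrite /mu (bigD1 i). Qed.

Lemma mu'_setb i t e : mu' i (setb i t e) = mu' i e.
Proof. by apply: eq_bigr => a /negbTE ha; rewrite ffunE ha. Qed.

Lemma mu'_flip i e : mu' i (flipb i e) = mu' i e.
Proof. by apply: eq_bigr => a /negbTE ha; rewrite ffunE ha. Qed.

Lemma sum_flip i t (g : pat -> R) :
  \sum_(e : pat) g e = \sum_(e : pat | e i == t) g e + \sum_(e : pat | e i == t) g (flipb i e).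
Proof.
rewrite (bigID (fun e : pat => e i == t)) /=; congr (_ + _).
rewrite (reindex_inj (inv_inj (flipbK i))) /=.
by apply: eq_bigl => e; rewrite ffunE eqxx; case: (e i); case: t.
Qed.

Lemma Ex_setb i t f :
  Ex (fun e => f (setb i t e)) = \sum_(e : pat | e i == t) f e * mu' i e.
Proof.
rewrite /Ex (sum_flip i t) -big_split /=; apply: eq_bigr => e /eqP hi.
have h1 : setb i t e = e.
  by apply/ffunP => x; rewrite ffunE; case: eqP => // ->; rewrite hi.
have h2 : setb i t (flipb i e) = e.
  by apply/ffunP => x; rewrite !ffunE; case: eqP => // ->; rewrite hi.
rewrite h1 h2 !(mu_split i) mu'_flip ffunE eqxx hi.
by rewrite -mulrDr -mulrDl (wC t) mul1r.
Qed.

Lemma Ex_split i f : Ex f = \sum_t w t * Ex (fun e => f (setb i t e)).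
Proof.
rewrite big_bool /= !Ex_setb !mulr_sumr /Ex (bigID (fun e : pat => e i)) /=.
congr (_ + _); apply: eq_big => e.
- by case: (e i).
- by move=> hi; rewrite (mu_split i) hi mulrCA.
- by case: (e i).
- by move=> hi; rewrite (mu_split i) (negbTE hi) mulrCA.
Qed.

Lemma indep_set k : forall (S : {set I}) (T : pred I) (f g : pat -> R), (#|S| <= k)%N ->
  dep (fun x => x \in S) f -> dep T g -> (forall x, x \in S -> T x -> False) ->
  Ex (fun e => f e * g e) = Ex f * Ex g.
Proof.
elim: k => [|k IH] S T f g hS df dg dis.
  have S0 : S = set0 by apply/cards0_eq; apply/eqP; rewrite -leqn0.
  pose e0 : pat := [ffun _ => false].
  have hf : forall e, f e = f e0 by move=> e; apply: df => x; rewrite S0 inE.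
  rewrite /Ex; under eq_bigr do rewrite hf -mulrA.
  by rewrite -mulr_sumr -/(Ex g) -(ExC (f e0)); congr (_ * _); apply: eq_bigr => e _; rewrite hf.
case: (set_0Vmem S) => [S0|[i iS]].
  pose e0 : pat := [ffun _ => false].
  have hf : forall e, f e = f e0 by move=> e; apply: df => x; rewrite S0 inE.
  rewrite /Ex; under eq_bigr do rewrite hf -mulrA.
  by rewrite -mulr_sumr -/(Ex g) -(ExC (f e0)); congr (_ * _); apply: eq_bigr => e _; rewrite hf.
rewrite (Ex_split i) (Ex_split i f) mulr_suml; apply: eq_bigr => t _.
rewrite -mulrA; congr (_ * _).
have hg : forall e, g (setb i t e) = g e.
  move=> e; apply: dg => x Tx; rewrite ffunE; case: eqP => // ex.
  by exfalso; apply: (dis x) => //; rewrite ex.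
transitivity (Ex (fun e => f (setb i t e) * g e)); first by apply: eq_bigr => e _; rewrite hg.
apply: (IH (S :\ i) T) => //.
- by move: hS; rewrite (cardsD1 i S) iS.
- move=> e e' h; apply: df => x xS; rewrite !ffunE; case: eqP => // /eqP xi.
  by apply: h; rewrite !inE xi.
- by move=> x; rewrite inE => /andP[_]; apply: dis.
Qed.

Lemma indep (S T : pred I) f g : dep S f -> dep T g -> (forall x, S x -> T x -> False) ->
  Ex (fun e => f e * g e) = Ex f * Ex g.
Proof.
move=> df dg dis; apply: (@indep_set #|[set x | S x]| [set x | S x] T) => //.
- by move=> e e' h; apply: df => x Sx; apply: h; rewrite inE.
- by move=> x; rewrite inE; apply: dis.
Qed.

Lemma indep_prod (J : eqType) (s : seq J) (P : pred J) (F : J -> pat -> R) (S : J -> pred I) :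
  uniq s -> (forall j, dep (S j) (F j)) ->
  (forall j j', j != j' -> forall x, S j x -> S j' x -> False) ->
  Ex (fun e => \prod_(j <- s | P j) F j e) = \prod_(j <- s | P j) Ex (F j).
Proof.
move=> us dF dis; elim: s us => [|j s IH] /=.
  move=> _; rewrite big_nil; transitivity (Ex (fun _ => 1)); last exact: Ex1.
  by apply: eq_bigr => e _; rewrite big_nil.
case/andP=> js us; rewrite big_cons.
transitivity (Ex (fun e => if P j then F j e * \prod_(j0 <- s | P j0) F j0 e else \prod_(j0 <- s | P j0) F j0 e)).
  by apply: eq_bigr => e _; rewrite big_cons.
case: (P j); last exact: IH.
rewrite -IH //; apply: (@indep (S j) (fun x => has (fun j' => S j' x) s) (F j) (fun e => \prod_(j0 <- s | P j0) F j0 e)).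
- exact: dF.
- move=> e e' h; rewrite big_seq_cond [RHS]big_seq_cond; apply: eq_bigr => j' /andP[j's _]; apply: (dF j') => x Sx; apply: h.
  by apply/hasP; exists j'.
- move=> x Sx /hasP[j' j's S'x]; apply: (dis j j') Sx S'x.
  by apply: contraNneq js => ->.
Qed.

End Prob.

Local Close Scope ring_scope.

Section Code.
Variable m : nat.
Variable n : nat -> nat.
Notation I := (idx m n).

Lemma updE (a : I) l b (j : 'I_m) : upd a l b j = if j.+1 == l then insubd (a j) b else a j.
Proof. by rewrite /upd ffunE. Qed.

Lemma coordE (a : I) (j : 'I_m) : Defs.coord a j.+1 = nat_of_ord (a j).
Proof.
case: j => j hj; rewrite /Defs.coord /= (insubT (fun k => k < m) hj) /=.
by [].
Qed.

Lemma coordF (a : I) k : (m <= k)%N -> Defs.coord a k.+1 = 0%N.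
Proof. by move=> hk; rewrite /Defs.coord /= insubF //; apply/negbTE; rewrite -leqNgt. Qed.

Definition D k (a : I) : pred I := fun x => [forall j : 'I_m, (k <= j)%N ==> (x j == a j)].

Lemma dep_Eel k : forall (a : I) (e e' : pattern m n), (forall x, D k a x -> e x = e' x) ->
  Eel k e a = Eel k e' a.
Proof.
elim: k => [|k IH] a e e' H /=.
  by rewrite H //; apply/forallP => j; apply/implyP => _.
congr (_ || _).
  apply: IH => x Hx; apply: H; apply/forallP => j; apply/implyP => hj.
  by have := forallP Hx j; rewrite (ltnW hj).
apply: eq_forallb => b; congr (_ ==> _); apply: IH => x Hx; apply: H.
apply/forallP => j; apply/implyP => hj.
have := forallP Hx j; rewrite (ltnW hj) /= updE.
by rewrite eqSS (gtn_eqF hj).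
Qed.

Lemma D_upd_disj k (hk : (k < m)%N) (a : I) (b b' : 'I_(n k.+1)) x :
  b != b' -> D k (upd a k.+1 b) x -> D k (upd a k.+1 b') x -> False.
Proof.
move=> nb H1 H2; pose j := Ordinal hk.
have := forallP H1 j; have := forallP H2 j; rewrite /= leqnn /= !updE eqxx.
move=> /eqP E2 /eqP E1.
have v1 : nat_of_ord (x j) = nat_of_ord b by rewrite E1 insubdK //; apply: ltn_ord.
have v2 : nat_of_ord (x j) = nat_of_ord b' by rewrite E2 insubdK //; apply: ltn_ord.
by move: nb; rewrite -(inj_eq val_inj) /= -v1 -v2 eqxx.
Qed.

Lemma D_a_upd_disj k (hk : (k < m)%N) (a : I) (b : 'I_(n k.+1)) x :
  (nat_of_ord b != Defs.coord a k.+1) -> D k a x -> D k (upd a k.+1 b) x -> False.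
Proof.
move=> nb H1 H2; pose j := Ordinal hk.
have := forallP H1 j; have := forallP H2 j; rewrite /= leqnn /= !updE eqxx.
move=> /eqP E2 /eqP E1.
have v1 : nat_of_ord (x j) = nat_of_ord (a j) by rewrite E1.
have v2 : nat_of_ord (x j) = nat_of_ord b by rewrite E2 insubdK //; apply: ltn_ord.
by move: nb; rewrite (coordE a j) -v1 -v2 eqxx.
Qed.

End Code.

Local Open Scope ring_scope.

Lemma nat_forall (R : comRingType) (T : finType) (P Q : pred T) :
  ([forall b, P b ==> Q b])%:R = \prod_(b | P b) (Q b)%:R :> R.
Proof.
case: (boolP [forall b, P b ==> Q b]) => H.
  by rewrite big1 // => b Pb; rewrite (implyP (forallP H b) Pb).
case/forallPn: H => b; rewrite negb_imply => /andP[Pb nQb].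
by rewrite (bigD1 b) //= (negbTE nQb) mul0r.
Qed.

Section Main.
Variable R : comRingType.
Variable eps : R.
Variable m : nat.
Variable n : nat -> nat.
Notation I := (idx m n).

Lemma Eel_prob k : (k <= m)%N -> forall a : I,
  Ex eps (fun e : pattern m n => (~~ Eel k e a)%:R) = epsl n eps k.
Proof.
elim: k => [|k IH] hk a /=.
  rewrite (Ex_split eps a) big_bool /=.
  have h : forall t, Ex eps (fun e : pattern m n => (~~ ~~ setb a t e a)%:R) = (t%:R).
    move=> t; rewrite -[RHS](@ExC _ eps I); apply: eq_bigr => e _.
    by rewrite ffunE eqxx negbK.
  by rewrite !h /w mulr1 mulr0 addr0.
have hk' : (k < m)%N by [].
have IH' := IH (ltnW hk).
pose P := fun b : 'I_(n k.+1) => nat_of_ord b != Defs.coord a k.+1.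
pose f := fun e : pattern m n => (~~ Eel k e a)%:R : R.
pose g := fun e : pattern m n => \prod_(b | P b) (Eel k e (upd a k.+1 b))%:R : R.
transitivity (Ex eps (fun e => f e - f e * g e)).
  apply: eq_bigr => e _; congr (_ * _).
  rewrite /f /g -nat_forall /=; case: (Eel k e a) => /=; rewrite ?mul0r ?subr0 ?mul1r //.
  by case: [forall _, _]; rewrite ?subrr ?subr0.
rewrite ExB (@indep _ _ _ (D k a)
   (fun x => [exists b : 'I_(n k.+1), P b && D k (upd a k.+1 b) x])).
- rewrite /g (@indep_prod _ _ _ _ _ _ _ (fun b : 'I_(n k.+1) => D k (upd a k.+1 b))).
  + rewrite /f IH'.
    have -> : \prod_(b | P b) Ex eps (fun e : pattern m n => (Eel k e (upd a k.+1 b))%:R)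
              = \prod_(b | P b) (1 - epsl n eps k).
      apply: eq_bigr => b _; rewrite -(IH' (upd a k.+1 b)).
      transitivity (Ex eps (fun e : pattern m n => 1 - (~~ Eel k e (upd a k.+1 b))%:R)).
        by apply: eq_bigr => e _; case: (Eel _ _ _); rewrite /= ?subrr ?subr0.
      by rewrite ExB ExC.
    rewrite prodr_const.
    have -> : #|P| = (n k.+1).-1.
      rewrite -[in RHS](card_ord (n k.+1)) -(cardC1 (a (Ordinal hk'))).
      by apply: eq_card => b; rewrite /P /= inE (coordE a (Ordinal hk')).
    by rewrite mulrBr mulr1.
  + exact: index_enum_uniq.
  + by move=> b e e' h; rewrite (dep_Eel h).
  + by move=> b b' nb x; apply: D_upd_disj.
- by move=> e e' h; rewrite /f (dep_Eel h).
- move=> e e' h; apply: eq_bigr => b Pb; congr (nat_of_bool _ )%:R; apply: dep_Eel => x Dx.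
  by apply: h; apply/existsP; exists b; rewrite Pb.
- by move=> x Dx /existsP[b /andP[Pb Db]]; apply: (D_a_upd_disj hk' Pb Dx Db).
Qed.

End Main.

Lemma Ssc_Eel m n k : forall (a : idx m n), (forall j : 'I_m, (j < k)%N -> nat_of_ord (a j) = 0%N) ->
  forall e, Ssc k e a = Eel k e a.
Proof.
elim: k => [|k IH] a ha e //=.
have hc : Defs.coord a k.+1 = 0%N.
  case: (ltnP k m) => hk; last exact: coordF.
  by rewrite (coordE a (Ordinal hk)) ha.
rewrite IH; last by move=> j hj; apply: ha; apply: ltnW.
congr (_ || _); apply: eq_forallb => b; rewrite hc lt0n IH //.
move=> j hj; rewrite updE eqSS (ltn_eqF hj); apply: ha; exact: ltnW.
Qed.

Lemma Pr_Ex (R : comRingType) m n (eps : R) (P : pred (pattern m n)) :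
  Pr eps P = Ex eps (fun e => (P e)%:R).
Proof.
rewrite /Pr /Ex big_mkcond /=; apply: eq_bigr => e _.
by case: (P e); rewrite ?mul1r ?mul0r.
Qed.


End Helpers.
Import Helpers.

Theorem lemma1 (R : realFieldType) (m : nat) (n : nat -> nat) (eps : R) :
  (1 <= m)%N ->
  (forall l, (1 <= l <= m)%N -> (2 <= n l)%N) ->
  (0 <= eps <= 1)%R ->
  forall one : idx m n, (forall j : 'I_m, nat_of_ord (one j) = 0%N) ->
  Pr eps (fun e => ~~ Ssc m e one) = epsl n eps m /\
  (forall a : idx m n, info a -> Pr eps (fun e => ~~ Eel m e a) = epsl n eps m).
Proof.
move=> _ _ _ one hone; split.
  rewrite Pr_Ex -(Eel_prob eps (leqnn m) one); apply: eq_bigr => e _.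
  by rewrite (@Ssc_Eel m n m one (fun j _ => hone j)).
by move=> a _; rewrite Pr_Ex (Eel_prob eps (leqnn m) a).
Qed.
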